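(* Let $v_1,\dots,v_m\in\mathbb{R}^2$ and let $P$ be the polygonal path obtained by placing these vectors tip-to-tail in this order, i.e. the path with vertices $q_0=0$, $q_k=v_1+\dots+v_k$ ($1\le k\le m$) and edges $s_k=[q_{k-1},q_k]$. If $P$ has a crossing, then among $v_1,\dots,v_m$ there is a vector with positive first coordinate and one with negative first coordinate, and there is a vector with positive second coordinate and one with negative second coordinate.
   Context: A crossing of $P$ is a point where two non-consecutive edges $s_i,s_j$ ($|i-j|\ge 2$) intersect transversally, i.e. they meet at a single point lying in the interior of both edges, and the two edges are not parallel. Here the ''first coordinate'' is the $i$-component and the ''second coordinate'' is the $j$-component of the vector. *)

(* Defs.v *)
(* Points/vectors of R^2 are pairs (x, y) : R * R over an
   arbitrary real field R (the statement is purely algebraic/order-theoretic). *)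
From mathcomp Require Import all_boot all_order all_algebra.
Set Implicit Arguments. Unset Strict Implicit. Unset Printing Implicit Defensive.
Import Order.TTheory GRing.Theory Num.Theory.
Local Open Scope ring_scope.

Section Path.
Variables (R : realFieldType) (m : nat) (v : 'I_m -> R * R).

(* vertex q_k = v_1 + ... + v_k  (here with 0-indexed vectors v 0, ..., v (m-1)):
   q k = sum of the first k vectors, q 0 = 0. *)
Definition vertex (k : nat) : R * R :=
  (\sum_(i < m | (i < k)%N) (v i).1, \sum_(i < m | (i < k)%N) (v i).2).

Definition on_edge (i : 'I_m) (p : R * R) : Prop :=
  exists t : R, 0 <= t <= 1 /\
    p = ((vertex i).1 + t * (v i).1, (vertex i).2 + t * (v i).2).

Definition in_edge_interior (i : 'I_m) (p : R * R) : Prop :=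
  exists t : R, 0 < t < 1 /\
    p = ((vertex i).1 + t * (v i).1, (vertex i).2 + t * (v i).2).

Definition parallel (a b : R * R) : Prop := a.1 * b.2 - a.2 * b.1 = 0.

Definition has_crossing : Prop :=
  exists (i j : 'I_m) (p : R * R),
    (i.+2 <= j)%N /\
    (forall x, (on_edge i x /\ on_edge j x) <-> x = p) /\
    in_edge_interior i p /\ in_edge_interior j p /\
    ~ parallel (v i) (v j).

End Path.

(* Main.v *)
Require Import Defs.
From mathcomp Require Import all_boot all_order all_algebra.
From mathcomp Require Import lra.
Import Order.TTheory GRing.Theory Num.Theory.
Local Open Scope ring_scope.

Lemma key (R : realFieldType) (m : nat) (f : 'I_m -> R) (i j : 'I_m) (t u : R) :
  (i < j)%N -> 0 < t < 1 -> 0 < u < 1 -> (forall k, f k <= 0) ->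
  \sum_(k < m | (k < i)%N) f k + t * f i = \sum_(k < m | (k < j)%N) f k + u * f j ->
  f i = 0 /\ f j = 0.
Proof.
move=> hij /andP[t0 t1] /andP[u0 u1] hf.
move=> E.
set S := \sum_(k < m | ((k < j)%N && ~~ (k < i)%N) && (k != i)) f k.
have Hj : \sum_(k < m | (k < j)%N) f k = \sum_(k < m | (k < i)%N) f k + (f i + S).
  rewrite (bigID (fun k : 'I_m => (k < i)%N)) /=; congr (_ + _).
    apply: eq_bigl => k /=; case: (ltnP k i) => hki; rewrite ?andbT ?andbF //.
    exact: ltn_trans hki hij.
  by rewrite (bigD1 i) //= hij ltnn.
rewrite Hj in E.
have hS : S <= 0 by apply: sumr_le0 => k _; exact: hf.
have hi := hf i; have hj := hf j.
have ha : (1 - t) * f i <= 0 by rewrite mulr_ge0_le0 // subr_ge0 ltW.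
have hb : u * f j <= 0 by rewrite mulr_ge0_le0 // ltW.
have E' : (1 - t) * f i + S + u * f j = 0 by move: E; set A := \sum_(k < m | _) f k; lra.
have a0 : (1 - t) * f i = 0 by lra.
have b0 : u * f j = 0 by lra.
have t1' : 1 - t != 0 by rewrite subr_eq0 eq_sym lt_eqF.
have u' : u != 0 by rewrite gt_eqF.
split.
  by move/eqP: a0; rewrite mulf_eq0 (negPf t1') => /eqP.
by move/eqP: b0; rewrite mulf_eq0 (negPf u') => /eqP.
Qed.

Lemma key2 (R : realFieldType) (m : nat) (f : 'I_m -> R) (i j : 'I_m) (t u : R) :
  (i < j)%N -> 0 < t < 1 -> 0 < u < 1 ->
  \sum_(k < m | (k < i)%N) f k + t * f i = \sum_(k < m | (k < j)%N) f k + u * f j ->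
  ((forall k, f k <= 0) \/ (forall k, 0 <= f k)) ->
  f i = 0 /\ f j = 0.
Proof.
move=> hij ht hu E [hf|hf]; first exact: (@key _ _ _ _ _ _ _ hij) ht hu hf E.
have [] := @key R m (fun k => - f k) i j t u hij ht hu.
- by move=> k; rewrite oppr_le0.
- by rewrite !sumrN !mulrN -!opprD E.
by move=> /eqP; rewrite oppr_eq0 => /eqP -> /eqP; rewrite oppr_eq0 => /eqP ->.
Qed.

Lemma ex_or (R : realFieldType) (m : nat) (f : 'I_m -> R) :
  ((exists k, 0 < f k) /\ (exists k, f k < 0)) \/
  ((forall k, f k <= 0) \/ (forall k, 0 <= f k)).
Proof.
have [k hk|n1] := pickP (fun k => 0 < f k); last first.
  right; left => x; move/negbT: (n1 x); by rewrite -leNgt.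
have [k' hk'|n2] := pickP (fun k => f k < 0); last first.
  right; right => x; move/negbT: (n2 x); by rewrite -leNgt.
by left; split; [exists k|exists k'].
Qed.

Theorem lemma2p1 (R : realFieldType) (m : nat) (v : 'I_m -> R * R) :
  has_crossing v ->
  (exists i, 0 < (v i).1) /\ (exists i, (v i).1 < 0) /\
  (exists i, 0 < (v i).2) /\ (exists i, (v i).2 < 0).
Proof.
move=> [i [j [p [hij [_ [[t [ht hp]] [[u [hu hq]] npar]]]]]]].
have hij' : (i < j)%N by apply: ltn_trans hij.
have E1 : \sum_(k < m | (k < i)%N) (v k).1 + t * (v i).1 =
          \sum_(k < m | (k < j)%N) (v k).1 + u * (v j).1.
  by have := f_equal fst hp; rewrite hq /= => ->.
have E2 : \sum_(k < m | (k < i)%N) (v k).2 + t * (v i).2 =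
          \sum_(k < m | (k < j)%N) (v k).2 + u * (v j).2.
  by have := f_equal snd hp; rewrite hq /= => ->.
case: (@ex_or _ _ (fun k => (v k).1)) => [[a b]|H1]; last first.
  have [a b] := @key2 _ _ _ _ _ _ _ hij' ht hu E1 H1.
  by exfalso; apply: npar; rewrite /parallel a b !mul0r mulr0 subrr.
case: (@ex_or _ _ (fun k => (v k).2)) => [[c d]|H2]; last first.
  have [c d] := @key2 _ _ _ _ _ _ _ hij' ht hu E2 H2.
  by exfalso; apply: npar; rewrite /parallel c d !mul0r mulr0 subrr.
by [].
Qed.
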